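(* Let $N\ge 2k$ be integers with $k\in\{1,2,3,4\}$, let $h>0$, $\alpha_1,\alpha_2,\alpha_3\in\mathbb{R}$, and let $\mathcal{D}_1,\mathcal{D}_2,\mathcal{D}_3\in\mathbb{C}^{N^3\times N^3}$ be as defined in the context. Define the block matrices $$\mathcal{CURL}_{\vec{\mathrm{k}}}=\begin{pmatrix}0&-\mathcal{D}_3&\mathcal{D}_2\\ \mathcal{D}_3&0&-\mathcal{D}_1\\ -\mathcal{D}_2&\mathcal{D}_1&0\end{pmatrix},\qquad \mathcal{DIV}_{\vec{\mathrm{k}}}=\begin{pmatrix}\mathcal{D}_1&\mathcal{D}_2&\mathcal{D}_3\end{pmatrix},$$ and $$\vec L_{\vec{\mathrm{k}}}:=\mathcal{CURL}_{\vec{\mathrm{k}}}\mathcal{CURL}_{\vec{\mathrm{k}}}'+\mathcal{DIV}_{\vec{\mathrm{k}}}'\mathcal{DIV}_{\vec{\mathrm{k}}},\qquad L_{\vec{\mathrm{k}}}:=\mathcal{DIV}_{\vec{\mathrm{k}}}\mathcal{DIV}_{\vec{\mathrm{k}}}'.$$ Then $\vec L_{\vec{\mathrm{k}}}=\mathrm{diag}(L_{\vec{\mathrm{k}}},L_{\vec{\mathrm{k}}},L_{\vec{\mathrm{k}}})$ (block diagonal).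
   Context: $X'$ denotes conjugate transpose, $I_N$ the $N\times N$ identity, $\otimes$ the Kronecker product, $\mathrm{i}=\sqrt{-1}$. For $\vec a\in\mathbb{R}^N$, $\mathrm{Circ}(\vec a)$ is the circulant matrix with $\mathrm{Circ}(\vec a)_{ij}=a_{((j-i)\bmod N)+1}$. Let $\mathbb{D}_1=\mathrm{Circ}(\vec v_1)$, $\mathbb{D}_0=\mathrm{Circ}(\vec v_0)$ with $\vec v_1=(-c_1,c_1,c_2,\dots,c_k,0,\dots,0,-c_k,\dots,-c_2)^T$, $\vec v_0=(d_1,d_1,d_2,\dots,d_k,0,\dots,0,d_k,\dots,d_2)^T\in\mathbb{R}^N$, where: $k=1$: $c_1=1$, $d_1=1/2$; $k=2$: $(c_1,c_2)=(9/8,-1/24)$, $(d_1,d_2)=(9/16,-1/16)$; $k=3$: $(c_1,c_2,c_3)=(25/64,-25/384,3/640)$, $(d_1,d_2,d_3)=(75/128,-25/256,3/256)$; $k=4$: $(c_1,\dots,c_4)=(1225/1024,-245/3072,49/5120,-5/7168)$, $(d_1,\dots,d_4)=(1225/2048,-245/2048,49/2048,-5/2048)$. Set $K_1=I_N\otimes I_N\otimes(\mathbb{D}_1/h)$, $K_2=I_N\otimes(\mathbb{D}_1/h)\otimes I_N$, $K_3=(\mathbb{D}_1/h)\otimes I_N\otimes I_N$, $L_1=I_N\otimes I_N\otimes(\alpha_1\mathbb{D}_0)$, $L_2=I_N\otimes(\alpha_2\mathbb{D}_0)\otimes I_N$, $L_3=(\alpha_3\mathbb{D}_0)\otimes I_N\otimes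 I_N$, and $\mathcal{D}_i=K_i+\mathrm{i}L_i$. *)

(* Defs.v *)
(* Complex numbers are R[i] = complex R over a real closed
   field R (mathcomp-real-closed); Kronecker product is mxtens's  A *t B
   (row-major, i.e. the standard Kronecker product). *)
From HB Require Import structures.
From mathcomp Require Import all_boot all_order all_algebra.
From mathcomp Require Import complex mxtens.
Set Implicit Arguments. Unset Strict Implicit. Unset Printing Implicit Defensive.
Import Order.TTheory GRing.Theory Num.Theory.
Local Open Scope ring_scope.
Local Open Scope complex_scope.

(* Circ(a)_{ij} = a_{((j-i) mod N)+1} (1-indexed); 0-indexed: a_{(j-i) mod N}. *)
Definition Circ (T : Type) (N : nat) (a : nat -> T) : 'M[T]_N :=
  \matrix_(i < N, j < N) a ((j + (N - i)) %% N)%N.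

Definition ccoef (R : fieldType) (k m : nat) : R :=
  match k, m with
  | 1, 1 => 1
  | 2, 1 => 9/8 | 2, 2 => -(1/24)
  | 3, 1 => 25/64 | 3, 2 => -(25/384) | 3, 3 => 3/640
  | 4, 1 => 1225/1024 | 4, 2 => -(245/3072) | 4, 3 => 49/5120 | 4, 4 => -(5/7168)
  | _, _ => 0
  end.

Definition dcoef (R : fieldType) (k m : nat) : R :=
  match k, m with
  | 1, 1 => 1/2
  | 2, 1 => 9/16 | 2, 2 => -(1/16)
  | 3, 1 => 75/128 | 3, 2 => -(25/256) | 3, 3 => 3/256
  | 4, 1 => 1225/2048 | 4, 2 => -(245/2048) | 4, 3 => 49/2048 | 4, 4 => -(5/2048)
  | _, _ => 0
  end.

(* v1 = (-c1, c1, c2, ..., ck, 0, ..., 0, -ck, ..., -c2)  (0-indexed entry i) *)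
Definition v1 (R : fieldType) (k N : nat) (i : nat) : R :=
  if i == 0%N then - ccoef R k 1
  else if (i <= k)%N then ccoef R k i
  else if (N - k < i)%N then - ccoef R k (N - i).+1
  else 0.

(* v0 = (d1, d1, d2, ..., dk, 0, ..., 0, dk, ..., d2) *)
Definition v0 (R : fieldType) (k N : nat) (i : nat) : R :=
  if i == 0%N then dcoef R k 1
  else if (i <= k)%N then dcoef R k i
  else if (N - k < i)%N then dcoef R k (N - i).+1
  else 0.

Definition Dmat1 (R : fieldType) (k N : nat) : 'M[R]_N := Circ N (v1 R k N).
Definition Dmat0 (R : fieldType) (k N : nat) : 'M[R]_N := Circ N (v0 R k N).

Section Ops.
Variables (R : rcfType) (k N : nat) (h a1 a2 a3 : R).
Local Notation C := R[i].
Local Notation M := (N * N * N)%N.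

Definition toC {m n} (A : 'M[R]_(m, n)) : 'M[C]_(m, n) := map_mx (fun x => x%:C) A.
Definition ctr {m n} (A : 'M[C]_(m, n)) : 'M[C]_(n, m) := (map_mx (@conjc R) A)^T.

Definition IdN : 'M[R]_N := 1%:M.
Definition K1 : 'M[C]_M := toC ((IdN *t IdN) *t (h^-1 *: Dmat1 R k N)).
Definition K2 : 'M[C]_M := toC ((IdN *t (h^-1 *: Dmat1 R k N)) *t IdN).
Definition K3 : 'M[C]_M := toC (((h^-1 *: Dmat1 R k N) *t IdN) *t IdN).
Definition L1 : 'M[C]_M := toC ((IdN *t IdN) *t (a1 *: Dmat0 R k N)).
Definition L2 : 'M[C]_M := toC ((IdN *t (a2 *: Dmat0 R k N)) *t IdN).
Definition L3 : 'M[C]_M := toC (((a3 *: Dmat0 R k N) *t IdN) *t IdN).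
Definition calD1 : 'M[C]_M := K1 + 'i *: L1.
Definition calD2 : 'M[C]_M := K2 + 'i *: L2.
Definition calD3 : 'M[C]_M := K3 + 'i *: L3.

Definition CURL : 'M[C]_(M + (M + M)) :=
  col_mx (row_mx 0 (row_mx (- calD3) calD2))
 (col_mx (row_mx calD3 (row_mx 0 (- calD1)))
         (row_mx (- calD2) (row_mx calD1 0))).
Definition DIV : 'M[C]_(M, M + (M + M)) := row_mx calD1 (row_mx calD2 calD3).
Definition vecL : 'M[C]_(M + (M + M)) := CURL *m ctr CURL + ctr DIV *m DIV.
Definition scalL : 'M[C]_M := DIV *m ctr DIV.
End Ops.

Definition blockdiag3 (C : pzRingType) (m : nat) (A : 'M[C]_m) : 'M[C]_(m + (m + m)) :=
  block_mx A 0 0 (block_mx A 0 0 A).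

(* Main.v *)
Require Import Defs.
From HB Require Import structures.
From mathcomp Require Import all_boot all_order all_algebra.
From mathcomp Require Import complex mxtens ring.
Set Implicit Arguments. Unset Strict Implicit. Unset Printing Implicit Defensive.
Import Order.TTheory GRing.Theory Num.Theory.
Local Open Scope ring_scope.

Section Gen.
Variables (T : comPzRingType) (n : nat).
Definition Cz (f : 'I_n.+1 -> T) : 'M[T]_n.+1 := \matrix_(i, j) f (j - i).

Lemma Cz_comm f g : Cz f *m Cz g = Cz g *m Cz f.
Proof.
apply/matrixP=> i j; rewrite !mxE.
have hK : cancel (fun l : 'I_n.+1 => i + j - l) (fun l => i + j - l).
  by move=> l; rewrite opprB addrC subrK.
rewrite (reindex_inj (can_inj hK)) /=; apply: eq_bigr => l _; rewrite !mxE mulrC.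
have -> : i + j - l - i = j - l by rewrite addrAC [i + j]addrC addrK.
have -> : j - (i + j - l) = l - i.
  by rewrite opprB [i + j]addrC opprD addrCA addNKr.
done.
Qed.

Lemma Cz1 : (1%:M : 'M[T]_n.+1) = Cz (fun x => (x == 0)%:R).
Proof.
apply/matrixP=> i j; rewrite !mxE subr_eq0 eq_sym.
by case: (j == i).
Qed.

Lemma Circ_Cz (a : nat -> T) : Circ n.+1 a = Cz (fun x => a (val x)).
Proof.
apply/matrixP=> i j; rewrite !mxE /=.
by rewrite modnDmr.
Qed.

Definition T3 (a b c : 'I_n.+1 -> T) := (Cz a *t Cz b) *t Cz c.

Lemma T3_comm a b c a' b' c' : T3 a b c *m T3 a' b' c' = T3 a' b' c' *m T3 a b c.
Proof. by rewrite /T3 !tensmx_mul (Cz_comm a) (Cz_comm b) (Cz_comm c). Qed.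
End Gen.
Local Open Scope complex_scope.
Section Spec.
Variables (R : rcfType) (k n : nat) (h a1 a2 a3 : R).
Local Notation C := R[i].
Local Notation N := n.+1.
Definition ee : 'I_N -> C := fun x => ((x == 0)%:R : R)%:C.
Definition ff (a : R) (v w : nat -> R) : 'I_N -> C :=
  fun x => (a * v (val x))%:C.
Definition gg (b c : R) (x : 'I_N) : C :=
  (b * v1 R k N x)%:C + 'i * (c * v0 R k N x)%:C.

Lemma tens3E (A B D : 'M[C]_N) (P : 'M[C]_(N * N * N)) :
  (forall i1 i2 i3 j1 j2 j3, P (mxtens_index (mxtens_index (i1, i2), i3))
      (mxtens_index (mxtens_index (j1, j2), j3)) = A i1 j1 * B i2 j2 * D i3 j3) ->
  P = (A *t B) *t D.
Proof.
move=> HP; apply/matrixP=> i j.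
case: (mxtens_indexP i) => i12 i3; case: (mxtens_indexP i12) => i1 i2.
case: (mxtens_indexP j) => j12 j3; case: (mxtens_indexP j12) => j1 j2.
by rewrite HP !tensmxE.
Qed.

Lemma D1E : calD1 k N h a1 = T3 ee ee (gg h^-1 a1).
Proof.
apply: tens3E => i1 i2 i3 j1 j2 j3.
rewrite /calD1 /K1 /L1 /toC /Dmat1 /Dmat0 /IdN Cz1 !Circ_Cz.
rewrite !(tensmxE, mxE) /ee /gg !rmorphM /=.
ring.
Qed.
Lemma D2E : calD2 k N h a2 = T3 ee (gg h^-1 a2) ee.
Proof.
apply: tens3E => i1 i2 i3 j1 j2 j3.
rewrite /calD2 /K2 /L2 /toC /Dmat1 /Dmat0 /IdN Cz1 !Circ_Cz.
rewrite !(tensmxE, mxE) /ee /gg !rmorphM /=.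
ring.
Qed.

Lemma D3E : calD3 k N h a3 = T3 (gg h^-1 a3) ee ee.
Proof.
apply: tens3E => i1 i2 i3 j1 j2 j3.
rewrite /calD3 /K3 /L3 /toC /Dmat1 /Dmat0 /IdN Cz1 !Circ_Cz.
rewrite !(tensmxE, mxE) /ee /gg !rmorphM /=.
ring.
Qed.

Definition cj (a : 'I_N -> C) (x : 'I_N) := (a (- x))^*.

Lemma ctrT3 a b c : ctr (T3 a b c) = T3 (cj a) (cj b) (cj c).
Proof.
apply: tens3E => i1 i2 i3 j1 j2 j3.
rewrite /ctr /T3 !(tensmxE, mxE) /cj !rmorphM !opprB //.
Qed.
End Spec.
Section Blk.
Variable R : rcfType.
Local Notation C := R[i].
Lemma ctr_row {m n1 n2} (A : 'M[C]_(m,n1)) (B : 'M[C]_(m,n2)) :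
  ctr (row_mx A B) = col_mx (ctr A) (ctr B).
Proof. by rewrite /ctr map_row_mx tr_row_mx. Qed.
Lemma ctr_col {m1 m2 n} (A : 'M[C]_(m1,n)) (B : 'M[C]_(m2,n)) :
  ctr (col_mx A B) = row_mx (ctr A) (ctr B).
Proof. by rewrite /ctr map_col_mx tr_col_mx. Qed.
Lemma ctr0 {m n} : ctr (0 : 'M[C]_(m,n)) = 0.
Proof. by rewrite /ctr map_mx0 trmx0. Qed.
Lemma ctrN {m n} (A : 'M[C]_(m,n)) : ctr (- A) = - ctr A.
Proof. by rewrite /ctr map_mxN linearN. Qed.

Lemma blk m (D1 D2 D3 : 'M[C]_m) :
  (forall X Y, X \in [:: D1; D2; D3] -> Y \in [:: D1; D2; D3] -> ctr X *m Y = Y *m ctr X) ->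
  let CU := col_mx (row_mx 0 (row_mx (- D3) D2))
    (col_mx (row_mx D3 (row_mx 0 (- D1))) (row_mx (- D2) (row_mx D1 0))) in
  let DV := row_mx D1 (row_mx D2 D3) in
  CU *m ctr CU + ctr DV *m DV = blockdiag3 (DV *m ctr DV).
Proof.
move=> H CU DV; rewrite /CU /DV.
rewrite !(ctr_row, ctr_col, ctr0, ctrN).
rewrite !(mul_col_mx, mul_mx_row, mul_row_col, mul_col_row, mulmxN, mulNmx, mul0mx, mulmx0, opprK, add0r, addr0).
have ->: forall A : 'M[C]_m, blockdiag3 A = col_mx (row_mx A (row_mx 0 0))
   (col_mx (row_mx 0 (row_mx A 0)) (row_mx 0 (row_mx 0 A))).
  move=> A; rewrite /blockdiag3 row_mx0 -[0 : 'M_(m+m,m)]col_mx0.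
  rewrite [block_mx A 0 0 A]block_mxEv [block_mx A 0 _ _]block_mxEv -block_mxEh.
  by rewrite /block_mx.
have c11 := H D1 D1; have c12 := H D1 D2; have c13 := H D1 D3.
have c21 := H D2 D1; have c22 := H D2 D2; have c23 := H D2 D3.
have c31 := H D3 D1; have c32 := H D3 D2; have c33 := H D3 D3.
rewrite !inE !eqxx ?orbT in c11 c12 c13 c21 c22 c23 c31 c32 c33.
rewrite /block_mx !(add_col_mx, add_row_mx).
rewrite c11 ?c12 ?c13 ?c21 ?c22 ?c23 ?c31 ?c32 ?c33 //.
rewrite !(oppr0, sub0r, subr0, addNr, add0r, addr0).
have p321 (a b c : 'M[C]_m) : c + b + a = a + (b + c) by rewrite addrC (addrC c).
have p312 (a b c : 'M[C]_m) : c + a + b = a + (b + c) by rewrite addrAC p321.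
have p213 (a b c : 'M[C]_m) : b + a + c = a + (b + c) by rewrite (addrC b) addrA.
by rewrite p321 p312 p213.
Qed.
End Blk.

Theorem corollary4p8 (R : rcfType) (k N : nat) (h a1 a2 a3 : R) :
  (1 <= k <= 4)%N -> (2 * k <= N)%N -> 0 < h ->
  vecL k N h a1 a2 a3 = blockdiag3 (scalL k N h a1 a2 a3).
Proof.
move=> Hk HN _.
case: N HN => [|n] HN.
  by exfalso; move: Hk HN; case: k.
rewrite /vecL /scalL /CURL /DIV.
apply: (blk (D1 := calD1 k n.+1 h a1) (D2 := calD2 k n.+1 h a2) (D3 := calD3 k n.+1 h a3)).
have HT : forall X, X \in [:: calD1 k n.+1 h a1; calD2 k n.+1 h a2; calD3 k n.+1 h a3] ->
  exists a b c, X = T3 a b c.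
  move=> X; rewrite !inE => /or3P[] /eqP ->.
  - by rewrite D1E; do 3 eexists.
  - by rewrite D2E; do 3 eexists.
  - by rewrite D3E; do 3 eexists.
move=> X Y /HT [a [b [c ->]]] /HT [a' [b' [c' ->]]].
by rewrite ctrT3 T3_comm.
Qed.
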